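(* In the category $\mathbf{Pos}$ of posets, any retract (in the arrow category) of a Dwyer map is a Dwyer map.
   Context: Posets are regarded as categories with a morphism $x\to y$ iff $x\le y$. A full subposet $S\subseteq C$ is a sieve if $c\le s$ with $s\in S$ implies $c\in S$, and a cosieve if $s\le c$ with $s\in S$ implies $c\in S$. A map $k\colon S\to C$ of posets is a Dwyer map if $k$ is the inclusion of a sieve and factors as $S\xrightarrow{i}T\xrightarrow{j}C$, where $j$ is the inclusion of a cosieve and $i$ is an inclusion having a right adjoint $r\colon T\to S$ (i.e. $i(s)\le t\iff s\le r(t)$) with $r\circ i=\mathrm{id}_S$. *)

(* Defs.v *)
From Stdlib Require Import Classical.

Record Poset := {
  carrier :> Type;
  le : carrier -> carrier -> Prop;
  le_refl : forall x, le x x;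
  le_trans : forall x y z, le x y -> le y z -> le x z;
  le_antisym : forall x y, le x y -> le y x -> x = y
}.

Arguments le {p} _ _.

Definition monotone {P Q : Poset} (f : P -> Q) : Prop :=
  forall x y, le x y -> le (f x) (f y).

(* Full subposets of C are given by predicates on C. *)
Definition is_sieve {C : Poset} (S : C -> Prop) : Prop :=
  forall c s, S s -> le c s -> S c.

Definition is_cosieve {C : Poset} (S : C -> Prop) : Prop :=
  forall s c, S s -> le s c -> S c.

(* k is (isomorphic onto) the inclusion of a full subposet:
   an order embedding, i.e. k x <= k y <-> x <= y (hence injective). *)
Definition full_embedding {S C : Poset} (k : S -> C) : Prop :=
  forall x y, le (k x) (k y) <-> le x y.

Definition image {S C : Poset} (k : S -> C) : C -> Prop :=
  fun c => exists s, k s = c.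

Definition sieve_inclusion {S C : Poset} (k : S -> C) : Prop :=
  full_embedding k /\ is_sieve (image k).

(* Dwyer map: k is the inclusion of a sieve and factors as S -i-> T -j-> C
   with T a cosieve of C (given by a predicate T), i the corestriction of k
   (so k s in T for all s), and r : T -> S a monotone right adjoint of i
   with r o i = id. *)
Definition Dwyer {S C : Poset} (k : S -> C) : Prop :=
  monotone k /\ sieve_inclusion k /\
  exists (T : C -> Prop) (HT : forall s, T (k s)) (r : {c : C | T c} -> S),
    is_cosieve T /\
    (forall t t' : {c : C | T c}, le (proj1_sig t) (proj1_sig t') -> le (r t) (r t')) /\
    (forall (s : S) (t : {c : C | T c}), le (k s) (proj1_sig t) <-> le s (r t)) /\
    (forall s : S, r (exist _ (k s) (HT s)) = s).

Definition arrow_retract {S' C' S C : Poset} (k' : S' -> C') (k : S -> C) : Prop :=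
  monotone k' /\ monotone k /\
  exists (a : S' -> S) (b : S -> S') (c : C' -> C) (d : C -> C'),
    monotone a /\ monotone b /\ monotone c /\ monotone d /\
    (forall x, b (a x) = x) /\ (forall y, d (c y) = y) /\
    (forall x, k (a x) = c (k' x)) /\ (forall x, k' (b x) = d (k x)).

(* Main.v *)
Require Import Defs.
From Stdlib Require Import Classical.

Theorem lemma3p10 (S' C' S C : Poset) (k' : S' -> C') (k : S -> C) :
  arrow_retract k' k -> Dwyer k -> Dwyer k'.
Proof.
  intros [mk' [mk [a [b [c [d [ma [mb [mc [md [ba [dc [ka kb]]]]]]]]]]]]].
  intros [_ [[fe sv] [T [HT [r [cos [mr [adj rid]]]]]]]].
  assert (rid' : forall c0 (p : T c0) s, c0 = k s -> r (exist _ c0 p) = s).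
  { intros c0 p s E; subst. rewrite (proof_irrelevance _ p (HT s)). apply rid. }
  split; [exact mk'|]. split; [split|].
  - intros x y; split; [|apply mk'].
    intro H. apply mc in H. rewrite <- !ka in H. apply fe in H. apply mb in H.
    rewrite !ba in H. exact H.
  - intros c' s [s0 E] H. subst. apply mc in H. rewrite <- ka in H.
    destruct (sv _ _ (ex_intro _ (a s0) eq_refl) H) as [s1 E1].
    exists (b s1). rewrite kb, E1, dc. reflexivity.
  - assert (HT' : forall s, T (c (k' s))) by (intro s; rewrite <- ka; apply HT).
    exists (fun y => T (c y)), HT',
      (fun t : {y : C' | T (c y)} => b (r (exist _ (c (proj1_sig t)) (proj2_sig t)))).
    split; [|split; [|split]].
    + intros s y Hs H. apply (cos _ _ Hs). apply mc, H.
    + intros [t pt] [t' pt'] H. simpl in *. apply mb, mr. simpl. apply mc, H.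
    + intros s [t pt]; simpl. split.
      * intro H. apply mc in H. rewrite <- ka in H.
        apply (adj (a s) (exist _ (c t) pt)) in H. apply mb in H. rewrite ba in H. exact H.
      * intro H. apply mk' in H. rewrite kb in H.
        eapply le_trans; [exact H|].
        rewrite <- (dc t) at 2. apply md.
        apply (adj _ (exist _ (c t) pt)). apply le_refl.
    + intro s. simpl. rewrite (rid' _ _ (a s)); [apply ba|apply eq_sym, ka].
Qed.
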